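(* Let $\varepsilon>0$, assume $(a,b,c)\neq(0,0,0)$, and let $0<\lambda<a_1$. Then the equilibrium point $$e_{2\lambda}=\Big(\frac{a}{\lambda-a_1},\frac{b}{\lambda-a_2},\frac{c}{\lambda-a_3}\Big)$$ of the $\varepsilon$-revised system $$\dot{\mathbf x}=\mathbf x\times\mathbf m(\mathbf x)+\varepsilon[(\mathbf x\times\mathbf m(\mathbf x))\times\mathbf m(\mathbf x)]$$ is unstable (not Lyapunov stable).
   Context: Fix constants $0<a_1<a_2<a_3$ and $a,b,c\in\mathbb R$. Set $\mathbf m(\mathbf x)=(a_1x^1+a,\ a_2x^2+b,\ a_3x^3+c)$; $\times$ is the cross product in $\mathbb R^3$. For $\lambda\notin\{a_1,a_2,a_3\}$ the point $e_{2\lambda}$ satisfies $\mathbf m(e_{2\lambda})=\lambda e_{2\lambda}$, so it is an equilibrium. *)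

(* Defs.v *)
From Stdlib Require Import Reals.
Open Scope R_scope.

Record V3 := mkV3 { c1 : R; c2 : R; c3 : R }.

Definition vadd (u v : V3) : V3 := mkV3 (c1 u + c1 v) (c2 u + c2 v) (c3 u + c3 v).
Definition vsub (u v : V3) : V3 := mkV3 (c1 u - c1 v) (c2 u - c2 v) (c3 u - c3 v).
Definition vscale (k : R) (u : V3) : V3 := mkV3 (k * c1 u) (k * c2 u) (k * c3 u).
Definition vnorm (u : V3) : R := sqrt (c1 u ^ 2 + c2 u ^ 2 + c3 u ^ 2).

Definition cross (u v : V3) : V3 :=
  mkV3 (c2 u * c3 v - c3 u * c2 v)
       (c3 u * c1 v - c1 u * c3 v)
       (c1 u * c2 v - c2 u * c1 v).

Definition mfield (a1 a2 a3 a b c : R) (x : V3) : V3 :=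
  mkV3 (a1 * c1 x + a) (a2 * c2 x + b) (a3 * c3 x + c).

Definition revised_field (eps a1 a2 a3 a b c : R) (x : V3) : V3 :=
  let m := mfield a1 a2 a3 a b c x in
  vadd (cross x m) (vscale eps (cross (cross x m) m)).

Definition e2 (a1 a2 a3 a b c lam : R) : V3 :=
  mkV3 (a / (lam - a1)) (b / (lam - a2)) (c / (lam - a3)).

Definition is_forward_solution (F : V3 -> V3) (x : R -> V3) : Prop :=
  (forall e, 0 < e -> exists d, 0 < d /\
     forall t, 0 <= t < d -> vnorm (vsub (x t) (x 0)) < e) /\
  (forall t, 0 < t ->
     derivable_pt_lim (fun s => c1 (x s)) t (c1 (F (x t))) /\
     derivable_pt_lim (fun s => c2 (x s)) t (c2 (F (x t))) /\
     derivable_pt_lim (fun s => c3 (x s)) t (c3 (F (x t)))).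

Definition lyapunov_stable (F : V3 -> V3) (p : V3) : Prop :=
  forall eps, 0 < eps -> exists delta, 0 < delta /\
    forall x0, vnorm (vsub x0 p) < delta ->
      (exists x, is_forward_solution F x /\ x 0 = x0) /\
      (forall x, is_forward_solution F x -> x 0 = x0 ->
         forall t, 0 <= t -> vnorm (vsub (x t) p) < eps).

(* Main.v *)
From Stdlib Require Import Reals Lra Psatz.
From Coquelicot Require Import Coquelicot.
Require Import Defs.
Open Scope R_scope.

Definition qf (al1 al2 al3 q1 q2 q3 g1 g2 g3 : R) (v : V3) : R :=
  (al1*(c1 v - q1)^2 + g1*c1 v) + (al2*(c2 v - q2)^2 + g2*c2 v) + (al3*(c3 v - q3)^2 + g3*c3 v).
Definition dqf (al1 al2 al3 q1 q2 q3 g1 g2 g3 : R) (v w : V3) : R :=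
  (2*al1*(c1 v - q1)+g1)*c1 w + (2*al2*(c2 v - q2)+g2)*c2 w + (2*al3*(c3 v - q3)+g3)*c3 w.

Lemma dq f t l al q g : is_derive f t l -> is_derive (fun s => al*(f s - q)^2 + g*f s) t ((2*al*(f t - q)+g)*l).
Proof. intro H.
 auto_derive. repeat split; exists l; exact H.
 replace (Derive (fun x => f x) t) with l by (symmetry; apply is_derive_unique; exact H). ring.
Qed.

Lemma dq' f t l al q g : derivable_pt_lim f t l -> derivable_pt_lim (fun s => al*(f s - q)^2 + g*f s) t ((2*al*(f t - q)+g)*l).
Proof. intro H. apply is_derive_Reals. apply dq. apply is_derive_Reals. exact H. Qed.

Lemma qf_deriv F x t al1 al2 al3 q1 q2 q3 g1 g2 g3 :
  is_forward_solution F x -> 0 < t ->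
  derivable_pt_lim (fun s => qf al1 al2 al3 q1 q2 q3 g1 g2 g3 (x s)) t
     (dqf al1 al2 al3 q1 q2 q3 g1 g2 g3 (x t) (F (x t))).
Proof.
  intros [_ Hd] ht. destruct (Hd t ht) as [h1 [h2 h3]].
  unfold qf, dqf.
  apply (derivable_pt_lim_plus (fun s => al1*(c1 (x s) - q1)^2 + g1*c1 (x s) + (al2*(c2 (x s) - q2)^2 + g2*c2 (x s)))
     (fun s => al3*(c3 (x s) - q3)^2 + g3*c3 (x s))).
  apply (derivable_pt_lim_plus (fun s => al1*(c1 (x s) - q1)^2 + g1*c1 (x s)) (fun s => (al2*(c2 (x s) - q2)^2 + g2*c2 (x s)))).
  all: apply (dq' (fun s => _ (x s))); assumption.
Qed.

Lemma comp_bd u v : Rabs (c1 u - c1 v) <= vnorm (vsub u v) /\ Rabs (c2 u - c2 v) <= vnorm (vsub u v)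
  /\ Rabs (c3 u - c3 v) <= vnorm (vsub u v).
Proof.
  unfold vnorm, vsub; simpl.
  set (d1 := c1 u - c1 v); set (d2 := c2 u - c2 v); set (d3 := c3 u - c3 v).
  rewrite <- (sqrt_Rsqr_abs d1), <- (sqrt_Rsqr_abs d2), <- (sqrt_Rsqr_abs d3).
  unfold Rsqr.
  repeat split; apply sqrt_le_1_alt; nra.
Qed.

Lemma term_bd al g w d : Rabs d <= 1 ->
  Rabs (al*(d*d+2*d*w)+g*d) <= Rabs d * (Rabs al*(1+2*Rabs w)+Rabs g).
Proof.
  intro Hd.
  replace (al*(d*d+2*d*w)+g*d) with (d*(al*(d+2*w)+g)) by ring.
  rewrite Rabs_mult. apply Rmult_le_compat_l; [apply Rabs_pos|].
  eapply Rle_trans; [apply Rabs_triang|]. rewrite Rabs_mult.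
  apply Rplus_le_compat_r. apply Rmult_le_compat_l; [apply Rabs_pos|].
  eapply Rle_trans; [apply Rabs_triang|]. rewrite Rabs_mult, (Rabs_right 2) by lra. lra.
Qed.

Lemma qf_cont F x al1 al2 al3 q1 q2 q3 g1 g2 g3 :
  is_forward_solution F x -> forall e, 0 < e -> exists d, 0 < d /\ forall t, 0 <= t < d ->
   Rabs (qf al1 al2 al3 q1 q2 q3 g1 g2 g3 (x t) - qf al1 al2 al3 q1 q2 q3 g1 g2 g3 (x 0)) < e.
Proof.
  intros [Hc _] e he.
  set (K := (Rabs al1*(1+2*Rabs (c1 (x 0) - q1))+Rabs g1) + (Rabs al2*(1+2*Rabs (c2 (x 0) - q2))+Rabs g2)
           + (Rabs al3*(1+2*Rabs (c3 (x 0) - q3))+Rabs g3)).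
  assert (HK : 0 <= K) by (unfold K; pose proof (Rabs_pos al1); pose proof (Rabs_pos al2);
    pose proof (Rabs_pos al3); pose proof (Rabs_pos g1); pose proof (Rabs_pos g2); pose proof (Rabs_pos g3);
    pose proof (Rabs_pos (c1 (x 0) - q1)); pose proof (Rabs_pos (c2 (x 0) - q2)); pose proof (Rabs_pos (c3 (x 0) - q3)); nra).
  set (eta := Rmin 1 (e / (K + 1))).
  assert (heta : 0 < eta) by (unfold eta; apply Rmin_pos; [lra| apply Rdiv_lt_0_compat; lra]).
  destruct (Hc eta heta) as [d [hd Hd]]. exists d; split; auto.
  intros t ht. specialize (Hd t ht). destruct (comp_bd (x t) (x 0)) as [b1 [b2 b3]].
  assert (e1 : eta <= 1) by apply Rmin_l.
  assert (e2 : eta * (K+1) <= e).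
  { unfold eta. assert (Rmin 1 (e/(K+1)) <= e/(K+1)) by apply Rmin_r.
    apply Rmult_le_compat_r with (r := K+1) in H; [|lra].
    unfold Rdiv in H. rewrite Rmult_assoc, Rinv_l in H by lra. lra. }
  unfold qf.
  set (d1 := c1 (x t) - c1 (x 0)); set (d2 := c2 (x t) - c2 (x 0)); set (d3 := c3 (x t) - c3 (x 0)).
  replace (al1 * (c1 (x t) - q1) ^ 2 + g1 * c1 (x t) + (al2 * (c2 (x t) - q2) ^ 2 + g2 * c2 (x t)) +
    (al3 * (c3 (x t) - q3) ^ 2 + g3 * c3 (x t)) -
    (al1 * (c1 (x 0) - q1) ^ 2 + g1 * c1 (x 0) + (al2 * (c2 (x 0) - q2) ^ 2 + g2 * c2 (x 0)) +
     (al3 * (c3 (x 0) - q3) ^ 2 + g3 * c3 (x 0))))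
   with ((al1*(d1*d1+2*d1*(c1 (x 0) - q1))+g1*d1) + (al2*(d2*d2+2*d2*(c2 (x 0) - q2))+g2*d2)
        + (al3*(d3*d3+2*d3*(c3 (x 0) - q3))+g3*d3)) by (unfold d1, d2, d3; ring).
  assert (t1 := term_bd al1 g1 (c1 (x 0) - q1) d1 ltac:(unfold d1; lra)).
  assert (t2 := term_bd al2 g2 (c2 (x 0) - q2) d2 ltac:(unfold d2; lra)).
  assert (t3 := term_bd al3 g3 (c3 (x 0) - q3) d3 ltac:(unfold d3; lra)).
  eapply Rle_lt_trans. { eapply Rle_trans; [apply Rabs_triang|]. apply Rplus_le_compat; [apply Rabs_triang| apply Rle_refl]. }
  assert (Rabs d1 * (Rabs al1*(1+2*Rabs (c1 (x 0) - q1))+Rabs g1) <= eta * (Rabs al1*(1+2*Rabs (c1 (x 0) - q1))+Rabs g1)).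
  { apply Rmult_le_compat_r; [pose proof (Rabs_pos al1); pose proof (Rabs_pos g1); pose proof (Rabs_pos (c1 (x 0) - q1)); nra| unfold d1; lra]. }
  assert (Rabs d2 * (Rabs al2*(1+2*Rabs (c2 (x 0) - q2))+Rabs g2) <= eta * (Rabs al2*(1+2*Rabs (c2 (x 0) - q2))+Rabs g2)).
  { apply Rmult_le_compat_r; [pose proof (Rabs_pos al2); pose proof (Rabs_pos g2); pose proof (Rabs_pos (c2 (x 0) - q2)); nra| unfold d2; lra]. }
  assert (Rabs d3 * (Rabs al3*(1+2*Rabs (c3 (x 0) - q3))+Rabs g3) <= eta * (Rabs al3*(1+2*Rabs (c3 (x 0) - q3))+Rabs g3)).
  { apply Rmult_le_compat_r; [pose proof (Rabs_pos al3); pose proof (Rabs_pos g3); pose proof (Rabs_pos (c3 (x 0) - q3)); nra| unfold d3; lra]. }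
  assert (eta * K <= eta*(K+1) - eta) by nra.
  unfold K in *. lra.
Qed.

Lemma mvt_ge (f f' : R -> R) a b K : 0 < a -> a < b ->
  (forall t, 0 < t -> derivable_pt_lim f t (f' t)) -> (forall t, 0 < t -> K <= f' t) ->
  K * (b - a) <= f b - f a.
Proof.
  intros ha hab Hd HK. destruct (MVT_cor2 f f' a b hab) as [c [e hc]].
  { intros c hc. apply Hd. lra. }
  rewrite e. apply Rmult_le_compat_r; [lra| apply HK; lra].
Qed.

Lemma right_lim (g : R -> R) (P : R -> R -> Prop) :
  (forall e, 0 < e -> exists d, 0 < d /\ forall t, 0 <= t < d -> Rabs (g t - g 0) < e) ->
  forall t, 0 < t -> exists s, 0 < s < t /\ Rabs (g s - g 0) < Rabs (g t - g 0) \/ g t = g 0.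
Proof.
  intros Hc t ht. destruct (Req_dec (g t) (g 0)) as [E|E]; [exists t; right; exact E|].
  destruct (Hc (Rabs (g t - g 0))) as [d [hd Hd]].
  { apply Rabs_pos_lt. lra. }
  exists (Rmin d t / 2). left. split.
  - split. apply Rlt_gt, Rdiv_lt_0_compat; [apply Rmin_pos; lra| lra].
    pose proof (Rmin_r d t). lra.
  - apply Hd. split. left. apply Rdiv_lt_0_compat; [apply Rmin_pos; lra| lra].
    pose proof (Rmin_l d t). pose proof (Rmin_pos d t hd ht). lra.
Qed.

Lemma const_from (g g' : R -> R) :
  (forall e, 0 < e -> exists d, 0 < d /\ forall t, 0 <= t < d -> Rabs (g t - g 0) < e) ->
  (forall t, 0 < t -> derivable_pt_lim g t (g' t)) -> (forall t, 0 < t -> g' t = 0) ->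
  forall t, 0 < t -> g t = g 0.
Proof.
  intros Hc Hd H0 t ht. destruct (right_lim g (fun _ _ => True) Hc t ht) as [s [[hs Hs] | E]]; auto.
  assert (A := mvt_ge g g' s t 0 (proj1 hs) (proj2 hs) Hd (fun u hu => Req_le _ _ (eq_sym (H0 u hu)))).
  assert (B := mvt_ge (fun u => - g u) (fun u => - g' u) s t 0 (proj1 hs) (proj2 hs)
     (fun u hu => derivable_pt_lim_opp g u (g' u) (Hd u hu))
     (fun u hu => ltac:(cbv beta; rewrite (H0 u hu); lra))).
  assert (g t = g s) by lra. rewrite H in Hs. lra.
Qed.

Lemma mono_from (g g' : R -> R) :
  (forall e, 0 < e -> exists d, 0 < d /\ forall t, 0 <= t < d -> Rabs (g t - g 0) < e) ->
  (forall t, 0 < t -> derivable_pt_lim g t (g' t)) -> (forall t, 0 < t -> 0 <= g' t) ->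
  forall t, 0 < t -> g 0 <= g t.
Proof.
  intros Hc Hd H0 t ht. destruct (Rle_lt_dec (g 0) (g t)) as [L|L]; auto.
  destruct (Hc (g 0 - g t)) as [d [hd Hd']]; [lra|].
  set (s := Rmin d t / 2).
  assert (hs : 0 < s < t) by (unfold s; pose proof (Rmin_r d t); pose proof (Rmin_pos d t hd ht); lra).
  assert (A := mvt_ge g g' s t 0 (proj1 hs) (proj2 hs) Hd H0).
  assert (B : Rabs (g s - g 0) < g 0 - g t).
  { apply Hd'. unfold s in *. pose proof (Rmin_l d t). lra. }
  apply Rabs_def2 in B. lra.
Qed.

Definition cr2 u1 u2 u3 v1 v2 v3 : R :=
  (u2*v3 - u3*v2)^2 + (u3*v1 - u1*v3)^2 + (u1*v2 - u2*v1)^2.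

Lemma lagrange u1 u2 u3 v1 v2 v3 :
  (u1^2+u2^2+u3^2)*(v1^2+v2^2+v3^2) = cr2 u1 u2 u3 v1 v2 v3 + (u1*v1+u2*v2+u3*v3)^2.
Proof. unfold cr2; ring. Qed.

Lemma cr2_nonneg u1 u2 u3 v1 v2 v3 : 0 <= cr2 u1 u2 u3 v1 v2 v3.
Proof. unfold cr2.
  pose proof (pow2_ge_0 (u2*v3 - u3*v2)); pose proof (pow2_ge_0 (u3*v1 - u1*v3)); pose proof (pow2_ge_0 (u1*v2 - u2*v1)); lra. Qed.

Lemma stepC p1 p2 p3 k1 k2 k3 z1 z2 z3 :
  let pk := p1*k1+p2*k2+p3*k3 in let P2 := p1^2+p2^2+p3^2 in
  let Z2 := z1^2+z2^2+z3^2 in let kz := k1*z1+k2*z2+k3*z3 in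
  (pk^2 + 2*cr2 p1 p2 p3 k1 k2 k3) * cr2 p1 p2 p3 z1 z2 z3 >= pk^2*P2*Z2 - 2*P2^2*kz^2.
Proof.
  intros pk P2 Z2 kz.
  set (u1 := p2*z3 - p3*z2); set (u2 := p3*z1 - p1*z3); set (u3 := p1*z2 - p2*z1).
  set (v1 := p2*k3 - p3*k2); set (v2 := p3*k1 - p1*k3); set (v3 := p1*k2 - p2*k1).
  set (W := u1*v1+u2*v2+u3*v3).
  set (CZ := cr2 p1 p2 p3 z1 z2 z3); set (CK := cr2 p1 p2 p3 k1 k2 k3).
  set (pz := p1*z1+p2*z2+p3*z3).
  assert (E1 : P2*Z2 = CZ + pz^2) by (unfold P2, Z2, CZ, pz; apply lagrange).
  assert (E2 : pk*pz = P2*kz - W) by (unfold pk, pz, P2, kz, W, u1,u2,u3,v1,v2,v3; ring).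
  assert (E3 : W^2 <= CZ*CK).
  { assert (CZ = u1^2+u2^2+u3^2) by (unfold CZ, cr2, u1, u2, u3; ring).
    assert (CK = v1^2+v2^2+v3^2) by (unfold CK, cr2, v1, v2, v3; ring).
    rewrite H, H0, lagrange. unfold W. pose proof (cr2_nonneg u1 u2 u3 v1 v2 v3). lra. }
  assert (E4 : (P2*kz - W)^2 <= 2*(P2*kz)^2 + 2*W^2) by (pose proof (pow2_ge_0 (P2*kz + W)); nra).
  assert (pk^2*P2*Z2 = pk^2*CZ + (pk*pz)^2) by (replace (pk^2*P2*Z2) with (pk^2*(P2*Z2)) by ring; rewrite E1; ring).
  rewrite E2 in H. assert (0 <= CZ) by apply cr2_nonneg. lra.
Qed.

Definition pkv b1 b2 b3 p1 p2 p3 := p1*(p1/b1)+p2*(p2/b2)+p3*(p3/b3).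
Definition P2v p1 p2 p3 := p1^2+p2^2+p3^2.
Definition D0v b1 b2 b3 p1 p2 p3 := (pkv b1 b2 b3 p1 p2 p3)^2 + 2*cr2 p1 p2 p3 (p1/b1) (p2/b2) (p3/b3).
Definition cA b1 b2 b3 p1 p2 p3 := (pkv b1 b2 b3 p1 p2 p3)^2*(P2v p1 p2 p3)*b1^2/(2*D0v b1 b2 b3 p1 p2 p3).
Definition cB lam b1 b2 b3 p1 p2 p3 := (P2v p1 p2 p3)^2*(b3+lam)^2/(4*lam^2*D0v b1 b2 b3 p1 p2 p3) + b3^2.
Definition SB lam b1 b2 b3 p1 p2 p3 := cA b1 b2 b3 p1 p2 p3/(2*cB lam b1 b2 b3 p1 p2 p3).

Lemma key_pos lam b1 b2 b3 p1 p2 p3 : 0 < lam -> 0 < b1 -> b1 <= b2 -> b2 <= b3 ->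
  0 < P2v p1 p2 p3 ->
  0 < pkv b1 b2 b3 p1 p2 p3 /\ 0 < D0v b1 b2 b3 p1 p2 p3 /\ 0 < cA b1 b2 b3 p1 p2 p3
  /\ 0 < cB lam b1 b2 b3 p1 p2 p3 /\ 0 < SB lam b1 b2 b3 p1 p2 p3.
Proof.
  intros hl h1 h12 h23 hP.
  assert (hpk : 0 < pkv b1 b2 b3 p1 p2 p3).
  { unfold pkv. unfold P2v in hP.
    assert (forall p b, 0 < b -> b <= b3 -> p^2 / b3 <= p*(p/b)).
    { intros p b hb hb3. replace (p*(p/b)) with (p^2 * /b) by (field; lra). unfold Rdiv.
      apply Rmult_le_compat_l; [apply pow2_ge_0|]. apply Rinv_le_contravar; lra. }
    pose proof (H p1 b1 h1 ltac:(lra)). pose proof (H p2 b2 ltac:(lra) ltac:(lra)).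
    pose proof (H p3 b3 ltac:(lra) ltac:(lra)).
    assert (0 < (p1^2+p2^2+p3^2)/b3) by (apply Rdiv_lt_0_compat; lra).
    unfold Rdiv in *. lra. }
  assert (hD : 0 < D0v b1 b2 b3 p1 p2 p3).
  { unfold D0v. pose proof (cr2_nonneg p1 p2 p3 (p1/b1) (p2/b2) (p3/b3)).
    pose proof (pow2_gt_0 _ (Rgt_not_eq _ _ hpk)). lra. }
  assert (hA : 0 < cA b1 b2 b3 p1 p2 p3).
  { unfold cA. apply Rdiv_lt_0_compat; [|lra].
    apply Rmult_lt_0_compat; [apply Rmult_lt_0_compat|]; auto;
      apply pow2_gt_0; lra. }
  assert (hB : 0 < cB lam b1 b2 b3 p1 p2 p3).
  { unfold cB. assert (0 < b3^2) by (apply pow2_gt_0; lra).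
    assert (0 <= P2v p1 p2 p3 ^ 2 * (b3 + lam) ^ 2 / (4 * lam ^ 2 * D0v b1 b2 b3 p1 p2 p3)).
    { apply Rmult_le_pos; [apply Rmult_le_pos; apply pow2_ge_0|].
      left. apply Rinv_0_lt_compat. assert (0 < lam^2) by (apply pow2_gt_0; lra). nra. }
    lra. }
  repeat split; auto. unfold SB. apply Rdiv_lt_0_compat; lra.
Qed.

Lemma key lam b1 b2 b3 p1 p2 p3 y1 y2 y3 : 0 < lam -> 0 < b1 -> b1 <= b2 -> b2 <= b3 ->
  0 < P2v p1 p2 p3 ->
  lam*(p1*y1+p2*y2+p3*y3) + /2*((b1+lam)*y1^2+(b2+lam)*y2^2+(b3+lam)*y3^2) = 0 ->
  y1^2+y2^2+y3^2 <= SB lam b1 b2 b3 p1 p2 p3 ->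
  cA b1 b2 b3 p1 p2 p3 / 2 * (y1^2+y2^2+y3^2) <=
    cr2 (p1+y1) (p2+y2) (p3+y3) (b1*y1) (b2*y2) (b3*y3).
Proof.
  intros hl h1 h12 h23 hP Hlev HS.
  destruct (key_pos lam b1 b2 b3 p1 p2 p3 hl h1 h12 h23 hP) as [hpk [hD [hA [hB hSB]]]].
  set (S := y1^2+y2^2+y3^2) in *.
  assert (hS0 : 0 <= S) by (unfold S; pose proof (pow2_ge_0 y1); pose proof (pow2_ge_0 y2); pose proof (pow2_ge_0 y3); lra).
  pose proof (stepC p1 p2 p3 (p1/b1) (p2/b2) (p3/b3) (b1*y1) (b2*y2) (b3*y3)) as C. cbv zeta in C.
  replace (p1 / b1 * (b1 * y1) + p2 / b2 * (b2 * y2) + p3 / b3 * (b3 * y3)) with (p1*y1+p2*y2+p3*y3) in C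
    by (field; lra).
  fold (pkv b1 b2 b3 p1 p2 p3) in C. fold (P2v p1 p2 p3) in C. fold (D0v b1 b2 b3 p1 p2 p3) in C.
  set (pk := pkv b1 b2 b3 p1 p2 p3) in *. set (P2 := P2v p1 p2 p3) in *. set (D0 := D0v b1 b2 b3 p1 p2 p3) in *.
  set (CZ := cr2 p1 p2 p3 (b1 * y1) (b2 * y2) (b3 * y3)) in *.
  set (Z2 := (b1 * y1) ^ 2 + (b2 * y2) ^ 2 + (b3 * y3) ^ 2) in *.
  set (py := p1*y1+p2*y2+p3*y3) in *.
  assert (HZ1 : b1^2 * S <= Z2).
  { unfold Z2, S. assert (b1^2 <= b2^2) by nra. assert (b1^2 <= b3^2) by nra.
    pose proof (pow2_ge_0 y1); pose proof (pow2_ge_0 y2); pose proof (pow2_ge_0 y3). nra. }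
  assert (HZ2 : Z2 <= b3^2 * S).
  { unfold Z2, S. assert (b1^2 <= b3^2) by nra. assert (b2^2 <= b3^2) by nra.
    pose proof (pow2_ge_0 y1); pose proof (pow2_ge_0 y2); pose proof (pow2_ge_0 y3). nra. }
  assert (Hpy : (lam*py)^2 <= (/2*(b3+lam)*S)^2).
  { set (T := (b1+lam)*y1^2+(b2+lam)*y2^2+(b3+lam)*y3^2) in *.
    assert (0 <= T) by (unfold T; pose proof (pow2_ge_0 y1); pose proof (pow2_ge_0 y2); pose proof (pow2_ge_0 y3); nra).
    assert (T <= (b3+lam)*S) by (unfold T, S; pose proof (pow2_ge_0 y1); pose proof (pow2_ge_0 y2); pose proof (pow2_ge_0 y3); nra).
    replace (lam*py) with (-(/2*T)) by lra. nra. }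
  assert (Hpy2 : py^2 <= (b3+lam)^2*S^2/(4*lam^2)).
  { apply (Rmult_le_reg_l (lam^2)); [apply pow2_gt_0; lra|].
    replace (lam ^ 2 * ((b3 + lam) ^ 2 * S ^ 2 / (4 * lam ^ 2))) with ((/2*(b3+lam)*S)^2) by (field; lra).
    replace (lam^2*py^2) with ((lam*py)^2) by ring. exact Hpy. }
  assert (HCZ : D0*CZ >= pk^2*P2*b1^2*S - 2*P2^2*((b3+lam)^2*S^2/(4*lam^2))).
  { assert (0 <= pk^2*P2) by (assert (0<P2) by exact hP; nra).
    assert (0 <= P2^2) by apply pow2_ge_0.
    nra. }
  assert (HCZ2 : CZ >= 2*cA b1 b2 b3 p1 p2 p3 * S - 2*(cB lam b1 b2 b3 p1 p2 p3 - b3^2)*S^2).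
  { unfold cA, cB. fold pk P2 D0.
    apply Rle_ge. apply (Rmult_le_reg_l D0); [lra|].
    replace (D0 * (2 * (pk ^ 2 * P2 * b1 ^ 2 / (2 * D0)) * S -
      2 * (P2 ^ 2 * (b3 + lam) ^ 2 / (4 * lam ^ 2 * D0) + b3 ^ 2 - b3 ^ 2) * S ^ 2))
     with (pk^2*P2*b1^2*S - 2*P2^2*((b3+lam)^2*S^2/(4*lam^2))) by (field; lra).
    apply Rge_le. exact HCZ. }
  set (YZ := cr2 y1 y2 y3 (b1 * y1) (b2 * y2) (b3 * y3)).
  assert (HN : /2*CZ - YZ <= cr2 (p1+y1) (p2+y2) (p3+y3) (b1*y1) (b2*y2) (b3*y3)).
  { unfold CZ, YZ, cr2.
    set (u1 := p2 * (b3 * y3) - p3 * (b2 * y2)); set (u2 := p3 * (b1 * y1) - p1 * (b3 * y3));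
    set (u3 := p1 * (b2 * y2) - p2 * (b1 * y1)).
    set (v1 := y2 * (b3 * y3) - y3 * (b2 * y2)); set (v2 := y3 * (b1 * y1) - y1 * (b3 * y3));
    set (v3 := y1 * (b2 * y2) - y2 * (b1 * y1)).
    replace ((p2 + y2) * (b3 * y3) - (p3 + y3) * (b2 * y2)) with (u1+v1) by (unfold u1, v1; ring).
    replace ((p3 + y3) * (b1 * y1) - (p1 + y1) * (b3 * y3)) with (u2+v2) by (unfold u2, v2; ring).
    replace ((p1 + y1) * (b2 * y2) - (p2 + y2) * (b1 * y1)) with (u3+v3) by (unfold u3, v3; ring).
    pose proof (pow2_ge_0 (u1+2*v1)); pose proof (pow2_ge_0 (u2+2*v2)); pose proof (pow2_ge_0 (u3+2*v3)).
    nra. }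
  assert (HYZ : YZ <= S * (b3^2*S)).
  { pose proof (lagrange y1 y2 y3 (b1 * y1) (b2 * y2) (b3 * y3)) as L. fold YZ S Z2 in L.
    pose proof (pow2_ge_0 (y1 * (b1 * y1) + y2 * (b2 * y2) + y3 * (b3 * y3))).
    assert (S*Z2 <= S*(b3^2*S)) by (apply Rmult_le_compat_l; auto). lra. }
  set (A := cA b1 b2 b3 p1 p2 p3) in *. set (B := cB lam b1 b2 b3 p1 p2 p3) in *.
  assert (HSB : B * S <= A / 2).
  { unfold SB in HS. fold A B in HS. apply Rmult_le_compat_l with (r := B) in HS; [|lra].
    replace (B * (A / (2 * B))) with (A/2) in HS by (field; lra). exact HS. }
  assert (B*S*S <= A/2*S) by (apply Rmult_le_compat_r; auto).
  lra.
Qed.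

Lemma perp_vec p1 p2 p3 : 0 < p1^2+p2^2+p3^2 ->
  exists w1 w2 w3, w1*p1+w2*p2+w3*p3 = 0 /\ 0 < w1^2+w2^2+w3^2.
Proof.
  intro hP. destruct (Req_dec p1 0) as [e1|e1]; [destruct (Req_dec p2 0) as [e2|e2]|].
  - exists 0, p3, 0. subst. split; [ring|]. simpl in *. lra.
  - exists p2, (-p1), 0. split; [ring|]. pose proof (pow2_gt_0 _ e2). pose proof (pow2_ge_0 p1). nra.
  - exists p2, (-p1), 0. split; [ring|]. pose proof (pow2_gt_0 _ e1). pose proof (pow2_ge_0 p2). nra.
Qed.

Lemma level_pt lam b1 b2 b3 p1 p2 p3 rho : 0 < lam -> 0 < b1 -> 0 < b2 -> 0 < b3 ->
  0 < p1^2+p2^2+p3^2 -> 0 < rho ->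
  exists y1 y2 y3, 0 < y1^2+y2^2+y3^2 < rho /\
   lam*(p1*y1+p2*y2+p3*y3) + /2*((b1+lam)*y1^2+(b2+lam)*y2^2+(b3+lam)*y3^2) = 0.
Proof.
  intros hl h1 h2 h3 hP hr.
  destruct (perp_vec p1 p2 p3 hP) as [w1 [w2 [w3 [hwp hW]]]].
  set (P2 := p1^2+p2^2+p3^2) in *. set (W2 := w1^2+w2^2+w3^2) in *.
  set (del := Rmin 1 (rho*W2/(2*(4*P2^2+1)))).
  assert (hP2 : 0 <= P2^2) by apply pow2_ge_0.
  assert (hd0 : 0 < del) by (unfold del; apply Rmin_pos; [lra|]; apply Rdiv_lt_0_compat; nra).
  assert (hd1 : del <= 1) by apply Rmin_l.
  assert (hd2 : del*(2*(4*P2^2+1)) <= rho*W2).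
  { pose proof (Rmin_r 1 (rho*W2/(2*(4*P2^2+1)))). fold del in H.
    apply Rmult_le_compat_r with (r := 2*(4*P2^2+1)) in H; [|lra].
    replace (rho * W2 / (2 * (4 * P2 ^ 2 + 1)) * (2 * (4 * P2 ^ 2 + 1))) with (rho*W2) in H by (field; lra). exact H. }
  set (d1 := w1 + del*p1); set (d2 := w2 + del*p2); set (d3 := w3 + del*p3).
  set (dd := d1^2+d2^2+d3^2).
  assert (Edd : dd = W2 + del^2*P2) by (unfold dd, d1, d2, d3, W2, P2; nra).
  assert (hdd : W2 <= dd) by (rewrite Edd; assert (0 <= del^2*P2) by (apply Rmult_le_pos; [apply pow2_ge_0|lra]); lra).
  set (dAd := (b1+lam)*d1^2+(b2+lam)*d2^2+(b3+lam)*d3^2).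
  assert (hdAd : lam*dd <= dAd) by (unfold dAd, dd; pose proof (pow2_ge_0 d1); pose proof (pow2_ge_0 d2); pose proof (pow2_ge_0 d3); nra).
  assert (hdAd0 : 0 < dAd) by nra.
  set (s := -2*lam*del*P2/dAd).
  exists (s*d1), (s*d2), (s*d3).
  assert (Epd : p1*d1+p2*d2+p3*d3 = del*P2) by (unfold d1, d2, d3, P2; nra).
  assert (ES : (s*d1)^2+(s*d2)^2+(s*d3)^2 = s^2*dd) by (unfold dd; ring).
  split; [split|].
  - rewrite ES. apply Rmult_lt_0_compat; [|lra]. apply pow2_gt_0. unfold s.
    apply Rmult_integral_contrapositive_currified; [| apply Rinv_neq_0_compat; lra].
    assert (0 < lam*del*P2) by (apply Rmult_lt_0_compat; [apply Rmult_lt_0_compat|]; lra). nra.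
  - rewrite ES.
    assert (E2 : s^2*dd*dAd^2 = 4*lam^2*del^2*P2^2*dd) by (unfold s; field; lra).
    assert (E3 : (lam*dd)^2 <= dAd^2) by (assert (0 <= lam*dd) by nra; nra).
    assert (0 < lam^2) by (apply pow2_gt_0; lra).
    assert (E4 : s^2*dd*(lam^2*dd^2) <= 4*lam^2*del^2*P2^2*dd).
    { rewrite <- E2. apply Rmult_le_compat_l; [apply Rmult_le_pos; [apply pow2_ge_0|lra]|]. nra. }
    assert (E5 : s^2*dd*dd <= 4*del^2*P2^2).
    { apply (Rmult_le_reg_l (lam^2*dd)); [nra|]. nra. }
    assert (E6 : s^2*dd*W2 <= s^2*dd*dd) by (apply Rmult_le_compat_l; [apply Rmult_le_pos; [apply pow2_ge_0|lra]| lra]).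
    assert (E7 : 4*del^2*P2^2 <= del*(4*P2^2+1)) by nra.
    assert (s^2*dd*W2 < rho*W2) by nra.
    nra.
  - replace (p1 * (s * d1) + p2 * (s * d2) + p3 * (s * d3)) with (s*(p1*d1+p2*d2+p3*d3)) by ring.
    rewrite Epd.
    replace ((b1 + lam) * (s * d1) ^ 2 + (b2 + lam) * (s * d2) ^ 2 + (b3 + lam) * (s * d3) ^ 2) with (s^2*dAd)
      by (unfold dAd; ring).
    unfold s. field. lra.
Qed.

Definition Ff (a1 a2 a3 eps lam p1 p2 p3 : R) := revised_field eps a1 a2 a3 ((lam-a1)*p1) ((lam-a2)*p2) ((lam-a3)*p3).
Definition Hf (a1 a2 a3 eps lam p1 p2 p3 : R) := qf (a1/2) (a2/2) (a3/2) 0 0 0 ((lam-a1)*p1) ((lam-a2)*p2) ((lam-a3)*p3).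
Definition dHf (a1 a2 a3 eps lam p1 p2 p3 : R) := dqf (a1/2) (a2/2) (a3/2) 0 0 0 ((lam-a1)*p1) ((lam-a2)*p2) ((lam-a3)*p3).
Definition Qf (a1 a2 a3 eps lam p1 p2 p3 : R) := qf ((a1-lam)/(2*lam)) ((a2-lam)/(2*lam)) ((a3-lam)/(2*lam)) p1 p2 p3 0 0 0.
Definition dQf (a1 a2 a3 eps lam p1 p2 p3 : R) := dqf ((a1-lam)/(2*lam)) ((a2-lam)/(2*lam)) ((a3-lam)/(2*lam)) p1 p2 p3 0 0 0.

Lemma idH a1 a2 a3 eps lam p1 p2 p3  v : (dHf a1 a2 a3 eps lam p1 p2 p3) v ((Ff a1 a2 a3 eps lam p1 p2 p3) v) = 0.
Proof. unfold dHf, Ff, dqf, revised_field, vadd, vscale, cross, mfield; simpl. field. Qed.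

Lemma idQ a1 a2 a3 eps lam p1 p2 p3  v : lam <> 0 -> (dQf a1 a2 a3 eps lam p1 p2 p3) v ((Ff a1 a2 a3 eps lam p1 p2 p3) v) = eps * cr2 (c1 v) (c2 v) (c3 v)
   ((a1-lam)*(c1 v - p1)) ((a2-lam)*(c2 v - p2)) ((a3-lam)*(c3 v - p3)).
Proof. intro hl. unfold dQf, Ff, dqf, revised_field, vadd, vscale, cross, mfield, cr2; simpl. field. auto. Qed.

Lemma levH a1 a2 a3 eps lam p1 p2 p3  v : (Hf a1 a2 a3 eps lam p1 p2 p3) v - (Hf a1 a2 a3 eps lam p1 p2 p3) (mkV3 p1 p2 p3) =
  lam*(p1*(c1 v - p1)+p2*(c2 v - p2)+p3*(c3 v - p3)) +
  /2*(((a1-lam)+lam)*(c1 v - p1)^2+((a2-lam)+lam)*(c2 v - p2)^2+((a3-lam)+lam)*(c3 v - p3)^2).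
Proof. unfold Hf, qf; simpl. field. Qed.

Lemma Qf_eq a1 a2 a3 eps lam p1 p2 p3  v : lam <> 0 -> (Qf a1 a2 a3 eps lam p1 p2 p3) v = ((a1-lam)*(c1 v - p1)^2 + (a2-lam)*(c2 v - p2)^2 + (a3-lam)*(c3 v - p3)^2)/(2*lam).
Proof. intro. unfold Qf, qf. field. auto. Qed.

Lemma core a1 a2 a3 eps lam p1 p2 p3 : 0 < lam -> lam < a1 -> a1 < a2 -> a2 < a3 -> 0 < eps -> 0 < p1^2+p2^2+p3^2 ->
  ~ lyapunov_stable (Ff a1 a2 a3 eps lam p1 p2 p3) (mkV3 p1 p2 p3).
Proof.
  intros hl h1 h12 h23 he hP Hst.
  set (b1 := a1 - lam); set (b2 := a2 - lam); set (b3 := a3 - lam).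
  assert (hb1 : 0 < b1) by (unfold b1; lra). assert (hb12 : b1 <= b2) by (unfold b1, b2; lra).
  assert (hb23 : b2 <= b3) by (unfold b2, b3; lra).
  destruct (key_pos lam b1 b2 b3 p1 p2 p3 hl hb1 hb12 hb23 hP) as [_ [_ [hA [_ hSB]]]].
  set (SB0 := SB lam b1 b2 b3 p1 p2 p3) in *. set (A := cA b1 b2 b3 p1 p2 p3) in *.
  destruct (Hst (sqrt SB0) (sqrt_lt_R0 _ hSB)) as [delta [hdel Hdel]].
  destruct (level_pt lam b1 b2 b3 p1 p2 p3 (delta^2) hl hb1 ltac:(lra) ltac:(lra) hP ltac:(apply pow2_gt_0; lra))
    as [y1 [y2 [y3 [[hS0 hS1] hlev]]]].
  set (x0 := mkV3 (p1+y1) (p2+y2) (p3+y3)).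
  assert (hx0 : vnorm (vsub x0 (mkV3 p1 p2 p3)) < delta).
  { unfold vnorm, vsub, x0; simpl.
    replace (p1 + y1 - p1) with y1 by ring. replace (p2 + y2 - p2) with y2 by ring. replace (p3 + y3 - p3) with y3 by ring.
    rewrite <- (sqrt_pow2 delta) by lra. apply sqrt_lt_1_alt. lra. }
  destruct (Hdel x0 hx0) as [[x [Hsol Hx0]] Hall].
  set (S := fun t => (c1 (x t) - p1)^2 + (c2 (x t) - p2)^2 + (c3 (x t) - p3)^2).
  assert (HS : forall t, 0 <= t -> S t < SB0).
  { intros t ht. specialize (Hall x Hsol Hx0 t ht). unfold vnorm, vsub in Hall; cbn [c1 c2 c3] in Hall.
    destruct (Rlt_le_dec (S t) SB0) as [L|L]; auto. exfalso.
    apply sqrt_le_1_alt in L. unfold S in L; cbv beta in L. lra. }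
  assert (HS0 : forall t, 0 <= S t) by (intro t; unfold S; pose proof (pow2_ge_0 (c1 (x t) - p1));
     pose proof (pow2_ge_0 (c2 (x t) - p2)); pose proof (pow2_ge_0 (c3 (x t) - p3)); lra).
  assert (HH : forall t, 0 < t -> (Hf a1 a2 a3 eps lam p1 p2 p3) (x t) = (Hf a1 a2 a3 eps lam p1 p2 p3) (x 0)).
  { apply (const_from (fun t => (Hf a1 a2 a3 eps lam p1 p2 p3) (x t)) (fun t => (dHf a1 a2 a3 eps lam p1 p2 p3) (x t) ((Ff a1 a2 a3 eps lam p1 p2 p3) (x t)))).
    - apply qf_cont with (F := Ff a1 a2 a3 eps lam p1 p2 p3); exact Hsol.
    - intros t ht. apply qf_deriv; auto.
    - intros t ht. apply idH. }
  assert (HH0 : (Hf a1 a2 a3 eps lam p1 p2 p3) (x 0) = (Hf a1 a2 a3 eps lam p1 p2 p3) (mkV3 p1 p2 p3)).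
  { pose proof (levH a1 a2 a3 eps lam p1 p2 p3 (x 0)) as L. rewrite Hx0 in L. unfold x0 in L; cbn [c1 c2 c3] in L.
    replace (p1 + y1 - p1) with y1 in L by ring. replace (p2 + y2 - p2) with y2 in L by ring.
    replace (p3 + y3 - p3) with y3 in L by ring. rewrite Hx0. fold b1 b2 b3 in L. unfold x0. lra. }
  assert (HQ : forall t, 0 < t -> (Qf a1 a2 a3 eps lam p1 p2 p3) (x 0) <= (Qf a1 a2 a3 eps lam p1 p2 p3) (x t)).
  { apply (mono_from (fun t => (Qf a1 a2 a3 eps lam p1 p2 p3) (x t)) (fun t => (dQf a1 a2 a3 eps lam p1 p2 p3) (x t) ((Ff a1 a2 a3 eps lam p1 p2 p3) (x t)))).
    - apply qf_cont with (F := Ff a1 a2 a3 eps lam p1 p2 p3); exact Hsol.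
    - intros t ht. apply qf_deriv; auto.
    - intros t ht. rewrite idQ by lra. apply Rmult_le_pos; [lra| apply cr2_nonneg]. }
  set (q0 := (Qf a1 a2 a3 eps lam p1 p2 p3) (x 0)).
  assert (hq0 : 0 < q0).
  { unfold q0. rewrite Qf_eq by lra. rewrite Hx0. unfold x0; simpl.
    replace (p1 + y1 - p1) with y1 by ring. replace (p2 + y2 - p2) with y2 by ring.
    replace (p3 + y3 - p3) with y3 by ring. fold b1 b2 b3.
    apply Rdiv_lt_0_compat; [|lra].
    pose proof (pow2_ge_0 y1); pose proof (pow2_ge_0 y2); pose proof (pow2_ge_0 y3). nra. }
  assert (HQup : forall t, (Qf a1 a2 a3 eps lam p1 p2 p3) (x t) <= b3/(2*lam) * S t).
  { intro t. rewrite Qf_eq by lra. fold b1 b2 b3. unfold S, Rdiv.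
    replace (b3 * / (2 * lam) * ((c1 (x t) - p1) ^ 2 + (c2 (x t) - p2) ^ 2 + (c3 (x t) - p3) ^ 2))
      with ((b3 * ((c1 (x t) - p1) ^ 2 + (c2 (x t) - p2) ^ 2 + (c3 (x t) - p3) ^ 2)) * / (2 * lam)) by ring.
    apply Rmult_le_compat_r; [left; apply Rinv_0_lt_compat; lra|].
    pose proof (pow2_ge_0 (c1 (x t) - p1)); pose proof (pow2_ge_0 (c2 (x t) - p2)); pose proof (pow2_ge_0 (c3 (x t) - p3)).
    nra. }
  set (K := eps * (A/2) * (2*lam/b3) * q0).
  assert (hK : 0 < K).
  { unfold K. apply Rmult_lt_0_compat; auto. apply Rmult_lt_0_compat; [apply Rmult_lt_0_compat; lra|].
    apply Rdiv_lt_0_compat; lra. }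
  assert (Hder : forall t, 0 < t -> K <= (dQf a1 a2 a3 eps lam p1 p2 p3) (x t) ((Ff a1 a2 a3 eps lam p1 p2 p3) (x t))).
  { intros t ht. rewrite idQ by lra. fold b1 b2 b3.
    assert (Hk := key lam b1 b2 b3 p1 p2 p3 (c1 (x t) - p1) (c2 (x t) - p2) (c3 (x t) - p3) hl hb1 hb12 hb23 hP).
    replace (p1 + (c1 (x t) - p1)) with (c1 (x t)) in Hk by ring.
    replace (p2 + (c2 (x t) - p2)) with (c2 (x t)) in Hk by ring.
    replace (p3 + (c3 (x t) - p3)) with (c3 (x t)) in Hk by ring.
    fold SB0 A in Hk. fold (S t) in Hk.
    assert (Hl : lam * (p1 * (c1 (x t) - p1) + p2 * (c2 (x t) - p2) + p3 * (c3 (x t) - p3)) +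
     / 2 * ((b1 + lam) * (c1 (x t) - p1) ^ 2 + (b2 + lam) * (c2 (x t) - p2) ^ 2 + (b3 + lam) * (c3 (x t) - p3) ^ 2) = 0).
    { pose proof (levH a1 a2 a3 eps lam p1 p2 p3 (x t)) as L. fold b1 b2 b3 in L. rewrite HH in L by auto. rewrite HH0 in L. lra. }
    specialize (Hk Hl (Rlt_le _ _ (HS t (Rlt_le _ _ ht)))).
    pose proof (HQ t ht). fold q0 in H. pose proof (HQup t).
    assert (q0 <= b3 / (2 * lam) * S t) by lra.
    assert (2*lam/b3*q0 <= S t).
    { apply (Rmult_le_reg_l (b3/(2*lam))); [apply Rdiv_lt_0_compat; lra|].
      replace (b3 / (2 * lam) * (2 * lam / b3 * q0)) with q0 by (field; lra). lra. }
    unfold K. replace (eps * (A / 2) * (2 * lam / b3) * q0) with (eps * ((A/2) * (2*lam/b3*q0))) by ring.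
    apply Rmult_le_compat_l; [lra|].
    assert (A/2 * (2*lam/b3*q0) <= A/2 * S t) by (apply Rmult_le_compat_l; lra). lra. }
  set (M := b3/(2*lam) * SB0).
  assert (hM : 0 < M) by (unfold M; apply Rmult_lt_0_compat; [apply Rdiv_lt_0_compat|]; lra).
  set (T := 2 + M/K).
  assert (hT : 1 < T) by (unfold T; assert (0 < M/K) by (apply Rdiv_lt_0_compat; lra); lra).
  assert (G := mvt_ge (fun t => (Qf a1 a2 a3 eps lam p1 p2 p3) (x t)) (fun t => (dQf a1 a2 a3 eps lam p1 p2 p3) (x t) ((Ff a1 a2 a3 eps lam p1 p2 p3) (x t))) 1 T K ltac:(lra) hT
     (fun t ht => qf_deriv (Ff a1 a2 a3 eps lam p1 p2 p3) x t _ _ _ _ _ _ _ _ _ Hsol ht) Hder).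
  cbv beta in G.
  pose proof (HQ 1 ltac:(lra)). fold q0 in H.
  pose proof (HQup T). pose proof (HS T ltac:(lra)).
  assert (b3/(2*lam) * S T <= M) by (unfold M; apply Rmult_le_compat_l; [left; apply Rdiv_lt_0_compat; lra| lra]).
  assert (K * (T - 1) = K + M) by (unfold T; field; lra).
  lra.
Qed.

Theorem theorem6p4 (a1 a2 a3 a b c eps lam : R) :
  0 < a1 -> a1 < a2 -> a2 < a3 ->
  0 < eps ->
  ~ (a = 0 /\ b = 0 /\ c = 0) ->
  0 < lam -> lam < a1 ->
  ~ lyapunov_stable (revised_field eps a1 a2 a3 a b c) (e2 a1 a2 a3 a b c lam).
Proof.
  intros h1 h12 h23 he habc hl hla.
  unfold e2.
  set (p1 := a/(lam-a1)); set (p2 := b/(lam-a2)); set (p3 := c/(lam-a3)).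
  assert (Ea : a = (lam-a1)*p1) by (unfold p1; field; lra).
  assert (Eb : b = (lam-a2)*p2) by (unfold p2; field; lra).
  assert (Ec : c = (lam-a3)*p3) by (unfold p3; field; lra).
  assert (hP : 0 < p1^2+p2^2+p3^2).
  { destruct (Req_dec p1 0) as [e1|e1]; [destruct (Req_dec p2 0) as [e2|e2]; [destruct (Req_dec p3 0) as [e3|e3]|]|].
    - exfalso. apply habc. rewrite Ea, Eb, Ec, e1, e2, e3. repeat split; ring.
    - pose proof (pow2_gt_0 _ e3). pose proof (pow2_ge_0 p1). pose proof (pow2_ge_0 p2). lra.
    - pose proof (pow2_gt_0 _ e2). pose proof (pow2_ge_0 p1). pose proof (pow2_ge_0 p3). lra.
    - pose proof (pow2_gt_0 _ e1). pose proof (pow2_ge_0 p3). pose proof (pow2_ge_0 p2). lra. }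
  rewrite Ea at 1. rewrite Eb at 1. rewrite Ec at 1.
  apply core; lra.
Qed.
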